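(* If $G$ is a connected bipartite graph, then $\mathrm{GP}(G)$ is an integer.
   Context: All graphs are simple and finite. For a connected graph $G$, $d_G(u,v)$ denotes the shortest-path distance and $\mathrm{Aut}(G)$ the automorphism group. The Graovac-Pisanski index is $$\mathrm{GP}(G)=\frac{|V(G)|}{2|\mathrm{Aut}(G)|}\sum_{u\in V(G)}\sum_{\alpha\in \mathrm{Aut}(G)} d_G(u,\alpha(u)).$$ *)

(* Defs.v *)
From HB Require Import structures.
From mathcomp Require Import all_boot all_order fingroup perm all_algebra.
Set Implicit Arguments. Unset Strict Implicit. Unset Printing Implicit Defensive.
Import GRing.Theory Num.Theory.

Definition simple_graph (T : finType) (e : rel T) : Prop :=
  symmetric e /\ irreflexive e.

Definition connected_graph (T : finType) (e : rel T) : Prop :=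
  forall x y : T, connect e x y.

Definition bipartite (T : finType) (e : rel T) : Prop :=
  exists c : T -> bool, forall x y, e x y -> c x != c y.

Definition walk_of_len (T : finType) (e : rel T) (n : nat) (x y : T) : bool :=
  [exists p : n.-tuple T, path e x p && (last x p == y)].

(* Shortest-path distance: least n (searched among 0..#|T|-1, which suffices
   in a connected graph) such that a walk of length n from x to y exists. *)
Definition gdist (T : finType) (e : rel T) (x y : T) : nat :=
  find (fun n => walk_of_len e n x y) (iota 0 #|T|).

Definition Aut (T : finType) (e : rel T) : {set {perm T}} :=
  [set s : {perm T} | [forall x, [forall y, e (s x) (s y) == e x y]]].

Definition GP (T : finType) (e : rel T) : rat :=
  ((#|T|%:R / (2 * #|Aut e|)%N%:R) *
   (\sum_(u : T) \sum_(a in Aut e) gdist e u (a u))%N%:R)%R.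

(* Main.v *)
Require Import Defs.
From HB Require Import structures.
From mathcomp Require Import all_boot all_order fingroup perm all_algebra.
Import GRing.Theory Num.Theory.
From mathcomp Require Import action.
From mathcomp Require Import ring.

Set Implicit Arguments. Unset Strict Implicit. Unset Printing Implicit Defensive.

Section GP.
Variables (T : finType) (e : rel T).

Lemma inAut (s : {perm T}) : (s \in Aut e) = [forall x, [forall y, e (s x) (s y) == e x y]].
Proof. by rewrite inE. Qed.

Lemma AutP (s : {perm T}) : reflect (forall x y, e (s x) (s y) = e x y) (s \in Aut e).
Proof.
rewrite inAut; apply: (iffP forallP) => [H x y | H x].
  by have /forallP/(_ y)/eqP := H x.
by apply/forallP => y; rewrite H.
Qed.

Lemma Aut_group_set : group_set (Aut e).
Proof.
apply/group_setP; split; first by apply/AutP => x y; rewrite !perm1.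
move=> a b /AutP Ha /AutP Hb; apply/AutP => x y; by rewrite !permM Hb Ha.
Qed.

Canonical AutG := Group Aut_group_set.

Lemma path_map (a : {perm T}) x p : a \in Aut e ->
  path e (a x) (map a p) = path e x p.
Proof.
move/AutP=> Ha; elim: p x => //= y p IH x; by rewrite Ha IH.
Qed.

Lemma walk_aut (a : {perm T}) n x y : a \in Aut e ->
  walk_of_len e n x y -> walk_of_len e n (a x) (a y).
Proof.
move=> Ha /existsP[p /andP[Hp Hl]]; apply/existsP; exists (map_tuple a p).
by rewrite /= path_map // Hp /= last_map (eqP Hl) eqxx.
Qed.

Lemma walk_autE (a : {perm T}) n x y : a \in Aut e ->
  walk_of_len e n (a x) (a y) = walk_of_len e n x y.
Proof.
move=> Ha; apply/idP/idP; last exact: walk_aut.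
have Hi : (a^-1)%g \in Aut e by rewrite -[Aut e]/(gval AutG) groupV.
by move/(walk_aut Hi); rewrite -!permM mulgV !perm1.
Qed.

Lemma gdist_aut (a : {perm T}) x y : a \in Aut e ->
  gdist e (a x) (a y) = gdist e x y.
Proof. by move=> Ha; apply: eq_find => n; rewrite walk_autE. Qed.


Lemma path_parity (c : T -> bool) : (forall x y, e x y -> c x != c y) ->
  forall x p, path e x p -> odd (size p) = (c x != c (last x p)).
Proof.
move=> Hc x p; elim: p x => //= [x _|y p IH x /andP[Hxy Hp]]; first by rewrite eqxx.
rewrite (IH y Hp); move: (Hc _ _ Hxy); by case: (c x); case: (c y); case: (c _).
Qed.

Lemma gdist_walk x y : connect e x y -> walk_of_len e (gdist e x y) x y.
Proof.
move/connectP=> [p Hp ->]; case: (shortenP Hp) => p' Hp' Hu _.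
have Hs : size p' < #|T|.
  have := max_card (mem (x :: p')); by rewrite (card_uniqP Hu).
have Hh : has (fun n => walk_of_len e n x (last x p')) (iota 0 #|T|).
  apply/hasP; exists (size p'); first by rewrite mem_iota.
  by apply/existsP; exists (in_tuple p'); rewrite /= Hp' eqxx.
have := nth_find 0 Hh; rewrite /gdist nth_iota ?add0n //.
by move: Hh; rewrite has_find size_iota.
Qed.

Lemma gdist_parity (c : T -> bool) : (forall x y, e x y -> c x != c y) ->
  forall x y, connect e x y -> odd (gdist e x y) = (c x != c y).
Proof.
move=> Hc x y /gdist_walk /existsP[p /andP[Hp /eqP Hl]].
by rewrite -{1}(size_tuple p) (path_parity Hc Hp) Hl.
Qed.


Lemma aut_color (c : T -> bool) : (forall x y, e x y -> c x != c y) ->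
  (forall x y, connect e x y) -> odd #|T| ->
  forall a, a \in Aut e -> forall x, c (a x) = c x.
Proof.
move=> Hc Hconn Hodd a Ha x.
pose q := [pred z | c (a z) != c z].
have cl : closed e q.
  move=> u v Huv; rewrite !inE.
  have h1 := Hc _ _ Huv.
  have h2 : c (a u) != c (a v) by apply: Hc; rewrite (AutP _ Ha).
  by move: h1 h2; case: (c u); case: (c v); case: (c (a u)); case: (c (a v)).
case Hq: (q x); last by apply/eqP; move: Hq; rewrite inE => /negbFE.
have Hall : forall y, c (a y) = ~~ c y.
  move=> y; have := closed_connect cl (Hconn x y); rewrite !inE.
  move: Hq; rewrite inE => -> /esym; by case: (c (a y)); case: (c y).
pose V := [set z | c z].
have s1 : a @: V \subset ~: V.
  by apply/subsetP => _ /imsetP[z Hz ->]; rewrite !inE Hall; rewrite inE in Hz; rewrite Hz.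
have s2 : a @: (~: V) \subset V.
  by apply/subsetP => _ /imsetP[z Hz ->]; rewrite !inE Hall; rewrite !inE in Hz.
have l1 := subset_leq_card s1; have l2 := subset_leq_card s2.
rewrite !card_imset in l1 l2; try exact: perm_inj.
have := cardsC V; move: Hodd => /[swap] <-.
have -> : #|~: V| = #|V| by apply/eqP; rewrite eqn_leq l1 l2.
by rewrite addnn odd_double.
Qed.


Definition Fs (u : T) := (\sum_(a in Aut e) gdist e u (a u))%N.
Definition Ds (x : T) := (\sum_(v in orbit 'P AutG x) gdist e x v)%N.

Lemma F_stab x : Fs x = (#|('C_AutG[x | 'P])%g| * Ds x)%N.
Proof.
rewrite /Fs /Ds (partition_big (fun a => aperm x a) (mem (orbit 'P AutG x))); last first.
  by move=> a Ha; apply: mem_orbit.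
rewrite big_distrr /=; apply: eq_bigr => v Hv.
transitivity (\sum_(a in amove 'P AutG x v) gdist e x v)%N.
  apply: eq_big => [a|a /andP[_ /eqP <-] //]; by rewrite !inE.
rewrite sum_nat_const; congr (_ * _)%N.
case/orbitP: Hv => b Hb <-; rewrite amove_act ?card_rcoset //.
exact: subsetT.
Qed.

Lemma F_const x b : b \in Aut e -> Fs (b x) = Fs x.
Proof.
move=> Hb.
have inj : injective (fun c : {perm T} => (b^-1 * c * b)%g).
  by move=> c1 c2 /mulIg /mulgI.
rewrite /Fs (reindex_inj inj) /=.
apply: eq_big => [c|c Hc].
  have HA : b \in AutG := Hb.
  change (((b^-1 * c * b)%g \in AutG) = (c \in AutG)).
  by rewrite groupMr // groupMl // groupV.
by rewrite !permM permK gdist_aut.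
Qed.

Lemma acts_all : [acts AutG, on [set: T] | 'P].
Proof. by apply/actsP => a Ha x; rewrite !inE. Qed.

Lemma orbit_sum O : O \in orbit 'P AutG @: [set: T] ->
  exists x, (\sum_(u in O) Fs u = #|Aut e| * Ds x)%N.
Proof.
case/imsetP => x _ ->; exists x.
transitivity (\sum_(u in orbit 'P AutG x) Fs x)%N.
  by apply: eq_bigr => _ /orbitP[a Ha <-]; rewrite F_const.
rewrite sum_nat_const F_stab mulnA card_orbit_stab //.
Qed.


Lemma Ds_even (c : T -> bool) : (forall x y, e x y -> c x != c y) ->
  (forall x y, connect e x y) -> odd #|T| -> forall x, 2 %| Ds x.
Proof.
move=> Hc Hconn Hodd x; apply: dvdn_sum => _ /orbitP[a Ha <-].
rewrite dvdn2 /aperm (gdist_parity Hc (Hconn _ _)) (aut_color Hc Hconn Hodd Ha).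
by rewrite eqxx.
Qed.

End GP.

Theorem theorem3p4 (T : finType) (e : rel T) :
  simple_graph e -> connected_graph e -> bipartite e ->
  exists z : int, GP e = (z%:~R)%R.
Proof.
move=> [Hsym Hirr] Hconn [c Hc].
pose P := orbit 'P (AutG e) @: [set: T].
pose K := (\sum_(O in P) (\sum_(u in O) Fs e u) %/ #|Aut e|)%N.
have Apos : (0 < #|Aut e|)%N := cardG_gt0 (AutG e).
have HS : (\sum_(u : T) \sum_(a in Aut e) gdist e u (a u))%N = (#|Aut e| * K)%N.
  transitivity (\sum_(u in [set: T]) Fs e u)%N.
    by apply: eq_bigl => u; rewrite inE.
  rewrite (set_partition_big _ (orbit_partition (acts_all e))) big_distrr /=.
  apply: eq_bigr => O HO; have [x ->] := orbit_sum HO; by rewrite mulKn.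
have Hev : 2 %| #|T| * K.
  case Hodd: (odd #|T|).
    apply: dvdn_mull; apply: dvdn_sum => O HO.
    have [x ->] := orbit_sum HO; rewrite mulKn //.
    exact: (Ds_even Hc Hconn Hodd).
  by apply: dvdn_mulr; rewrite dvdn2 Hodd.
exists ((#|T| * K) %/ 2)%N; rewrite /GP HS.
have E := divnK Hev.
set m := ((#|T| * K) %/ 2)%N in E *.
have -> : ((m%:Z)%:~R : rat) = (m%:R : rat) by [].
have Em : (m%:R : rat) = ((#|T|%:R * K%:R) / 2)%R.
  by rewrite -natrM -E natrM mulfK.
rewrite Em !natrM; field.
by rewrite pnatr_eq0 -lt0n.
Qed.
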